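(* Let $d\ge1$ be fixed, let $P$ be a set of $n\ge2$ points in $\mathbb{R}^d$ with spread $\Phi$, and let $\varepsilon\in(0,1/2)$. Let $p_1,\dots,p_n$ be a greedy permutation of $P$ with radii $r_1\ge r_2\ge\cdots$, let $F_i$ be the friend lists, and let $G=(P,E)$ be the directed graph with $E=\{p_j\to p_i : p_j\in F_i,\ i=1,\dots,n\}$, as defined in the context. Then for every query point $q\in\mathbb{R}^d$, the greedy routing procedure described in the context (starting from $p_1$) returns a point $p\in P$ with $d(q,p)\le(1+\varepsilon)\min_{p'\in P}d(q,p')$, and the query time is $O(\varepsilon^{-d-1}\log^2\Phi)$.
   Context: Distances are Euclidean. The spread $\Phi$ of $P$ is the ratio of the largest to the smallest pairwise distance in $P$. Greedy permutation: $p_1\in P$ is arbitrary; for $i\ge2$, $p_i$ is a point of $P\setminus P_{i-1}$ furthest from $P_{i-1}=\{p_1,\dots,p_{i-1}\}$, i.e., maximizing $d(p,P_{i-1})=\min_{x\in P_{i-1}}d(p,x)$. The radii are $r_1=\max_{p\in P}d(p,p_1)$ and, for $i\ge2$, $r_{i-1}=d(p_i,P_{i-1})$. The friend list of $p_i$ ($i\ge2$) is $F_i=P_{i-1}\cap\{x: d(x,p_i)\le 8r_{i-1}/\varepsilon\}$, and $F_1=\emptyset$. In $G$ the outgoing edges of each vertex are stored sorted by increasing index of the destination. Greedy routing for $q$: set the current vertex $c=p_1$; scan the outgoing edges $c\to p_j$ of $c$ in increasing order of $j$, and as soon as an edge with $d(q,p_j)\le(1-\varepsilon/4)d(q,c)$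 is found, set $c=p_j$ and restart scanning the outgoing edges of the new $c$; when all outgoing edges of $c$ are scanned without such a move, return $c$. The constants in the $O(\cdot)$ notation depend only on $d$. *)

(* Defs.v *)
From HB Require Import structures.
From mathcomp Require Import all_boot all_order all_algebra.
From mathcomp Require Import reals exp.
Set Implicit Arguments. Unset Strict Implicit. Unset Printing Implicit Defensive.
Import Order.TTheory GRing.Theory Num.Theory.
Local Open Scope ring_scope.

Section GreedyRouting.
Variables (R : realType) (d : nat).
Notation pt := 'rV[R]_d.

Definition edist (x y : pt) : R := Num.sqrt (\sum_(k < d) (x ord0 k - y ord0 k) ^+ 2).

(* The greedy permutation is given as a sequence ps = [:: p_1; ...; p_n];
   the paper's p_i is  nth 0 ps (i-1)  (0-based indices below). *)
Variable ps : seq pt.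
Notation p i := (nth 0 ps i).

(* d(x, P_i) with P_i = {p_1,...,p_i} = {nth 0 ps k | k < i}; meaningful for i >= 1
   (the default of the min is p_1, which belongs to P_i). *)
Definition dpre (x : pt) (i : nat) : R :=
  \big[Num.min/edist x (p 0)]_(k < i) edist x (p k).

(* greedy permutation: for i >= 2 (1-based), p_i maximizes d(., P_{i-1}) over P \ P_{i-1}
   (0-based: for 0 < i <= j < n, d(p_j, prefix i) <= d(p_i, prefix i)). *)
Definition greedy_perm : Prop :=
  forall i j : nat, (0 < i)%N -> (i <= j)%N -> (j < size ps)%N ->
    dpre (p j) i <= dpre (p i) i.

(* radii r_i (1-based i >= 1): r_1 = max_p d(p, p_1);  r_{i-1} = d(p_i, P_{i-1}) for i >= 2,
   i.e. r_i = d(p_{i+1}, P_i) = dpre (nth 0 ps i) i. *)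
Definition radius (i : nat) : R :=
  if i == 1%N then \big[Num.max/0]_(x <- ps) edist x (p 0)
  else dpre (p i) i.

Variable eps : R.

(* edge p_k -> p_j (0-based k, j) iff p_k is in the friend list F of p_j:
   j is not the first point, k < j and d(p_k, p_j) <= 8 r_{j} / eps
   (0-based j corresponds to paper index j+1, whose friend radius is r_{(j+1)-1} = r_j). *)
Definition edge (k j : nat) : bool :=
  [&& (0 < j)%N, (k < j)%N & edist (p k) (p j) <= 8 * radius j / eps].

Definition out_edges (c : nat) : seq nat := [seq j <- iota 0 (size ps) | edge c j].

Variable q : pt.

Definition improves (c j : nat) : bool := edist q (p j) <= (1 - eps / 4) * edist q (p c).

(* route c t r : greedy routing started at the current vertex p_c scans exactly t
   edges in total and returns p_r. *)
Inductive route : nat -> nat -> nat -> Prop :=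
| route_stop c :
    (forall m, (m < size (out_edges c))%N -> ~~ improves c (nth 0%N (out_edges c) m)) ->
    route c (size (out_edges c)) c
| route_move c m t r :
    (m < size (out_edges c))%N ->
    improves c (nth 0%N (out_edges c) m) ->
    (forall m', (m' < m)%N -> ~~ improves c (nth 0%N (out_edges c) m')) ->
    route (nth 0%N (out_edges c) m) t r ->
    route c (m.+1 + t) r.

Definition maxdist : R :=
  \big[Num.max/0]_(i < size ps) \big[Num.max/0]_(j < size ps | i != j) edist (p i) (p j).
Definition mindist : R :=
  \big[Num.min/maxdist]_(i < size ps) \big[Num.min/maxdist]_(j < size ps | i != j)
     edist (p i) (p j).
Definition spread : R := maxdist / mindist.

End GreedyRouting.

(* Main.v *)
Require Import Defs.
From HB Require Import structures.
From mathcomp Require Import all_boot all_order all_algebra.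
From mathcomp Require Import reals sequences exp.
From mathcomp Require Import ring lra zify.
Set Implicit Arguments. Unset Strict Implicit. Unset Printing Implicit Defensive.
Import Order.TTheory GRing.Theory Num.Theory.
Local Open Scope ring_scope.


Section Metric.
Variables (R : realType) (d : nat).
Implicit Types x y z : 'rV[R]_d.

Lemma sqrt_le (a b : R) : 0 <= b -> a <= b ^+ 2 -> Num.sqrt a <= b.
Proof. move=> b0 h; have := ler_wsqrtr h; by rewrite sqrtr_sqr ger0_norm. Qed.
Lemma sq_sqrt (a : R) : 0 <= a -> Num.sqrt a ^+ 2 = a.
Proof. exact: sqr_sqrtr. Qed.
Lemma sqrt_ge (a b : R) : 0 <= a -> b ^+ 2 <= a -> b <= Num.sqrt a.
Proof. move=> a0 h. have := ler_wsqrtr h. rewrite sqrtr_sqr. move=> h2; exact: le_trans (ler_norm b) h2. Qed.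
Lemma sqrt_mul (a b : R) : 0 <= a -> Num.sqrt (a * b) = Num.sqrt a * Num.sqrt b.
Proof. move=> a0; exact: sqrtrM. Qed.
Lemma sqrt_ge0 (a : R) : 0 <= Num.sqrt a.
Proof. exact: sqrtr_ge0. Qed.

Lemma alg2 (s t u v a b : R) : a ^+ 2 = s ^+ 2 + u ^+ 2 -> b ^+ 2 = t ^+ 2 + v ^+ 2 ->
  s * t + u * v <= a * b -> (s + t) ^+ 2 + (u + v) ^+ 2 <= (a + b) ^+ 2.
Proof. move=> e1 e2 h; nra. Qed.

Lemma sqrt2D_tri (s t u v : R) : 0 <= s -> 0 <= t ->
  Num.sqrt ((s + t) ^+ 2 + (u + v) ^+ 2) <=
  Num.sqrt (s ^+ 2 + u ^+ 2) + Num.sqrt (t ^+ 2 + v ^+ 2).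
Proof.
move=> s0 t0.
set A := s ^+ 2 + u ^+ 2; set B := t ^+ 2 + v ^+ 2.
have A0 : 0 <= A by rewrite /A addr_ge0 ?sqr_ge0.
have B0 : 0 <= B by rewrite /B addr_ge0 ?sqr_ge0.
have h1 : s * t + u * v <= Num.sqrt A * Num.sqrt B.
  rewrite -sqrt_mul //; apply: sqrt_ge; first by rewrite mulr_ge0.
  have := sqr_ge0 (s * v - t * u); rewrite /A /B; nra.
have eA := sq_sqrt A0; have eB := sq_sqrt B0.
apply: sqrt_le; first by rewrite addr_ge0 ?sqrt_ge0.
exact: (alg2 eA eB h1).
Qed.

Lemma sq_mono (a b : R) : 0 <= a -> a <= b -> a ^+ 2 <= b ^+ 2.
Proof. move=> a0 h; nra. Qed.

Lemma mink_step (S F G x y : R) : 0 <= S -> 0 <= F -> 0 <= G ->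
  Num.sqrt S <= Num.sqrt F + Num.sqrt G ->
  Num.sqrt (S + (x + y) ^+ 2) <= Num.sqrt (F + x ^+ 2) + Num.sqrt (G + y ^+ 2).
Proof.
move=> S0 F0 G0 h.
have h2 := sqrt2D_tri x y (sqrt_ge0 F) (sqrt_ge0 G).
rewrite !sq_sqrt // in h2.
apply: le_trans h2; apply: ler_wsqrtr; rewrite lerD2r.
have := sq_mono (sqrt_ge0 S) h; by rewrite sq_sqrt.
Qed.

Lemma minkowski n (f g : 'I_n -> R) :
  Num.sqrt (\sum_(k < n) (f k + g k) ^+ 2) <=
  Num.sqrt (\sum_(k < n) f k ^+ 2) + Num.sqrt (\sum_(k < n) g k ^+ 2).
Proof.
elim: n f g => [|n IH] f g; first by rewrite !big_ord0 sqrtr0 addr0.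
rewrite !big_ord_recr /=.
apply: mink_step; try (apply: sumr_ge0 => i _; apply: sqr_ge0).
exact: IH.
Qed.

Lemma edist_ge0 x y : 0 <= edist x y.
Proof. exact: sqrtr_ge0. Qed.

Lemma edist_sym x y : edist x y = edist y x.
Proof. by rewrite /edist; congr Num.sqrt; apply: eq_bigr => k _; rewrite -sqrrN opprB. Qed.

Lemma edist_xx x : edist x x = 0.
Proof. by rewrite /edist big1 ?sqrtr0 // => k _; rewrite subrr expr0n. Qed.

Lemma edist_tri x y z : edist x z <= edist x y + edist y z.
Proof.
rewrite /edist.
have -> : \sum_(k < d) (x ord0 k - z ord0 k) ^+ 2 =
  \sum_(k < d) ((x ord0 k - y ord0 k) + (y ord0 k - z ord0 k)) ^+ 2.
  by apply: eq_bigr => k _; congr (_ ^+ 2); rewrite addrA subrK.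
exact: minkowski.
Qed.

Lemma coord_le_edist x y k : `|x ord0 k - y ord0 k| <= edist x y.
Proof.
rewrite /edist -sqrtr_sqr ler_sqrt; last by apply: sumr_ge0 => i _; apply: sqr_ge0.
by rewrite (bigD1 k) //= lerDl; apply: sumr_ge0 => i _; apply: sqr_ge0.
Qed.

Lemma edist_eq0 x y : edist x y = 0 -> x = y.
Proof.
rewrite /edist => /eqP; rewrite sqrtr_eq0 => h.
have h0 : \sum_(k < d) (x ord0 k - y ord0 k) ^+ 2 = 0.
  apply/eqP; rewrite eq_le h /=; by apply: sumr_ge0 => i _; apply: sqr_ge0.
apply/matrixP => i j; rewrite (ord1 i).
have := coord_le_edist x y j; rewrite /edist h0 sqrtr0.
rewrite normr_le0 subr_eq0 => /eqP //.
Qed.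

Lemma edist_cell x y (h : R) : 0 <= h ->
  (forall k, `|x ord0 k - y ord0 k| <= h) -> edist x y <= d%:R * h.
Proof.
move=> h0 H.
have dh : 0 <= d%:R * h by rewrite mulr_ge0.
rewrite /edist; apply: sqrt_le => //.
apply: (le_trans (y := \sum_(k < d) h ^+ 2)).
  apply: ler_sum => k _. rewrite -real_normK ?num_real //.
  by rewrite ler_pXn2r ?nnegrE ?normr_ge0.
rewrite sumr_const card_ord -mulr_natl.
have hd : (d%:R : R) <= d%:R ^+ 2.
  by rewrite -natrX ler_nat; case: (d) => // n; rewrite expnS leq_pmulr.
have := sqr_ge0 h; have := ler0n R d; nra.
Qed.

End Metric.


Section PS.
Variables (R : realType) (d : nat) (ps : seq 'rV[R]_d).
Local Notation n := (size ps).
Local Notation p i := (nth 0 ps i).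
Hypothesis Hn : (2 <= n)%N.
Hypothesis Hu : uniq ps.
Hypothesis Hg : greedy_perm ps.

Lemma dpre_le x i k : (k < i)%N -> dpre ps x i <= edist x (p k).
Proof. move=> ki; rewrite /dpre; exact: (bigmin_le _ (Ordinal ki) (fun k : 'I_i => edist x (p k))). Qed.

Lemma dpre_gt x i a : (0 < i)%N -> (forall k, (k < i)%N -> a < edist x (p k)) ->
  a < dpre ps x i.
Proof.
move=> i0 H; rewrite /dpre; apply/bigmin_gtP; split; first exact: H.
by move=> k _; apply: H.
Qed.

Lemma dpre_ge x i a : (0 < i)%N -> (forall k, (k < i)%N -> a <= edist x (p k)) ->
  a <= dpre ps x i.
Proof.
move=> i0 H; rewrite /dpre; apply/bigmin_geP; split; first exact: H.
by move=> k _; apply: H.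
Qed.

Lemma p_inj i j : (i < n)%N -> (j < n)%N -> p i = p j -> i = j.
Proof. by move=> hi hj /eqP; rewrite nth_uniq // => /eqP. Qed.

Lemma edist_pos i j : (i < n)%N -> (j < n)%N -> i != j -> 0 < edist (p i) (p j).
Proof.
move=> hi hj ij; rewrite lt_neqAle edist_ge0 andbT eq_sym; apply/eqP => /edist_eq0.
by move/(p_inj hi hj)=> e; rewrite e eqxx in ij.
Qed.

Lemma maxdist_ge i j : (i < n)%N -> (j < n)%N -> i != j -> edist (p i) (p j) <= maxdist ps.
Proof.
move=> hi hj ij; rewrite /maxdist.
apply: (bigmax_sup (Ordinal hi)) => //.
apply: (bigmax_sup (Ordinal hj)) => //.
Qed.

Lemma mindist_le i j : (i < n)%N -> (j < n)%N -> i != j -> mindist ps <= edist (p i) (p j).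
Proof.
move=> hi hj ij; rewrite /mindist.
apply: (bigmin_inf (Ordinal hi)) => //.
apply: (bigmin_inf (Ordinal hj)) => //.
Qed.

Lemma maxdist_gt0 : 0 < maxdist ps.
Proof.
have h0 : (0 < n)%N by apply: leq_trans Hn.
have h1 : (1 < n)%N by [].
exact: lt_le_trans (edist_pos h0 h1 isT) (maxdist_ge h0 h1 isT).
Qed.

Lemma mindist_gt0 : 0 < mindist ps.
Proof.
rewrite /mindist; apply/bigmin_gtP; split; first exact: maxdist_gt0.
move=> i _; apply/bigmin_gtP; split; first exact: maxdist_gt0.
by move=> j ij; apply: edist_pos.
Qed.

Lemma mindist_le_max : mindist ps <= maxdist ps.
Proof.
have h0 : (0 < n)%N by apply: leq_trans Hn.
have h1 : (1 < n)%N by [].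
exact: le_trans (mindist_le h0 h1 isT) (maxdist_ge h0 h1 isT).
Qed.

Lemma spread_ge1 : 1 <= spread ps.
Proof.
rewrite /spread ler_pdivlMr ?mindist_gt0 // mul1r; exact: mindist_le_max.
Qed.

Lemma dpre1 x : dpre ps x 1 = edist x (p 0).
Proof.
apply/eqP; rewrite eq_le; apply/andP; split; first exact: dpre_le.
apply: dpre_ge => // k; rewrite ltnS leqn0 => /eqP ->; exact: lexx.
Qed.

Lemma radius_eq j : (0 < j)%N -> (j < n)%N -> radius ps j = dpre ps (p j) j.
Proof.
move=> j0 jn; rewrite /radius; case: eqP => [->|//].
rewrite dpre1; apply/eqP; rewrite eq_le; apply/andP; split.
  rewrite big_seq; apply: bigmax_le; first exact: edist_ge0.
  move=> x xin.
  have [k kn ->] : exists2 k, (k < n)%N & x = p k.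
    by exists (index x ps); rewrite ?index_mem ?nth_index.
  case: k kn => [|k] kn; first by rewrite edist_xx edist_ge0.
  have := Hg (isT : (0 < 1)%N) (isT : (1 <= k.+1)%N) kn.
  by rewrite !dpre1.
apply: (le_bigmax_seq _ (p 1)) => //; exact: mem_nth.
Qed.

Lemma g_le_max j : (0 < j)%N -> (j < n)%N -> dpre ps (p j) j <= maxdist ps.
Proof.
move=> j0 jn; apply: le_trans (dpre_le _ j0) _.
apply: maxdist_ge => //; first exact: leq_trans jn.
by rewrite -lt0n.
Qed.

Lemma g_ge_min j : (0 < j)%N -> (j < n)%N -> mindist ps <= dpre ps (p j) j.
Proof.
move=> j0 jn; apply: dpre_ge => // k kj; apply: mindist_le => //.
  exact: ltn_trans jn.
by rewrite neq_ltn kj orbT.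
Qed.

End PS.


Section Num1.
Variable R : realType.
Lemma num1 (e L dl : R) : 0 < e -> e < 1/2 -> 0 <= dl -> (1 + e) * dl < L ->
  dl + e * L / 4 <= (1 - e / 4) * L.
Proof. move=> e0 e1 d0 h.
have L0 : 0 < L by nra.
have h2 : 0 <= e * (1 - e) * L by apply: mulr_ge0; [apply: mulr_ge0|]; lra.
have key : (1 + e) * dl <= (1 + e) * (L - e * L / 2) by lra.
rewrite ler_pM2l in key; last lra.
lra. Qed.
Lemma num2 (e L dl : R) : 0 < e -> e < 1/2 -> 0 <= dl -> (1 + e) * dl < L ->
  e * L / 4 < L - dl.
Proof. move=> e0 e1 d0 h. have L0 : 0 < L by nra.
have h2 : 0 <= e * (3 - e) * L by apply: mulr_ge0; [apply: mulr_ge0|]; lra.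
have key : (1 + e) * dl < (1 + e) * (L - e * L / 4) by lra.
rewrite ltr_pM2l in key; last lra.
lra. Qed.
End Num1.

Section Route.
Variables (R : realType) (d : nat) (ps : seq 'rV[R]_d) (eps : R) (q : 'rV[R]_d).
Local Notation n := (size ps).
Local Notation p i := (nth 0 ps i).
Hypothesis Hn : (2 <= n)%N.
Hypothesis Hu : uniq ps.
Hypothesis Hg : greedy_perm ps.
Hypothesis He0 : 0 < eps.
Hypothesis He1 : eps < 1 / 2.

Local Notation out := (out_edges ps eps).
Local Notation L c := (edist q (p c)).

Lemma mem_out c j : (j \in out c) = (j < n)%N && edge ps eps c j.
Proof. by rewrite /out_edges mem_filter mem_iota add0n andbC. Qed.

Lemma out_lt c j : j \in out c -> (j < n)%N /\ (c < j)%N.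
Proof. by rewrite mem_out => /andP[-> /and3P[_ -> _]]. Qed.

Lemma sorted_out c : sorted ltn (out c).
Proof. apply: sorted_filter; [exact: ltn_trans | exact: iota_ltn_sorted]. Qed.

Lemma nth_out_mono c i j : (i <= j)%N -> (j < size (out c))%N ->
  (nth 0%N (out c) i <= nth 0%N (out c) j)%N.
Proof.
rewrite leq_eqVlt => /orP[/eqP -> //|ij] js.
apply: ltnW; apply: (sorted_ltn_nth ltn_trans 0%N (sorted_out c)) => //.
by rewrite inE (ltn_trans ij js).
Qed.

Lemma improves_le c j : improves ps eps q c j -> L j <= L c.
Proof.
rewrite /improves => h; apply: le_trans h _.
have := edist_ge0 q (p c); have := He0; nra.
Qed.

Lemma route_exists c : (c < n)%N -> exists t r, route ps eps q c t r.
Proof.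
have : (n - c <= n - c)%N by [].
move: {2}(n - c)%N => k; elim: k c => [|k IH] c hk cn.
  by move: hk; rewrite leqn0 subn_eq0 leqNgt cn.
case hh: (has (improves ps eps q c) (out c)).
  set m := find (improves ps eps q c) (out c).
  have ms : (m < size (out c))%N by rewrite -has_find.
  have jin : nth 0%N (out c) m \in out c by exact: mem_nth.
  have [jn cj] := out_lt jin.
  have [t [r hr]] : exists t r, route ps eps q (nth 0%N (out c) m) t r.
    apply: IH => //.
    by move: hk cj jn; clear; lia.
  exists (m.+1 + t)%N, r; apply: route_move => //.
    exact: nth_find.
  by move=> m' hm'; rewrite (before_find _ hm').
exists (size (out c)), c; apply: route_stop => m hm.
have /hasPn H : ~~ has (improves ps eps q c) (out c) by rewrite hh.
by apply: H; exact: mem_nth.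
Qed.

Lemma route_lt c t r : route ps eps q c t r -> (c < n)%N -> (r < n)%N.
Proof.
elim=> {c t r} // c m t r ms _ _ _ IH _.
by apply: IH; have [] := out_lt (mem_nth 0%N ms).
Qed.

Variable m0 : nat.
Hypothesis m0n : (m0 < n)%N.
Local Notation dl := (edist q (p m0)).

Definition Inv c := L c <= (1 + eps) * dl \/
  forall k, (k < c)%N -> eps * L c / 4 < edist (p k) (p m0).

Lemma bad_step c : (c < n)%N -> (1 + eps) * dl < L c ->
  (forall k, (k < c)%N -> eps * L c / 4 < edist (p k) (p m0)) ->
  exists j, [/\ j \in out c, improves ps eps q c j &
    forall k, (k < j)%N -> eps * L c / 4 < edist (p k) (p m0)].
Proof.
move=> cn hb hinv.
have dl0 : 0 <= dl := edist_ge0 _ _.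
have L0 : 0 < L c by apply: le_lt_trans _ hb; apply: mulr_ge0 => //; move: He0; lra.
set a := eps * L c / 4.
have a0 : 0 <= a by rewrite /a; move: He0 L0; nra.
pose P := fun k => (k < n)%N && (edist (p k) (p m0) <= a).
have exP : exists k, P k by exists m0; rewrite /P m0n edist_xx a0.
case: (ex_minnP exP) => j /andP[jn hj] jmin.
have below : forall k, (k < j)%N -> a < edist (p k) (p m0).
  move=> k kj; rewrite ltNge; apply/negP => hk.
  have : (j <= k)%N by apply: jmin; rewrite /P hk andbT (ltn_trans kj jn).
  by rewrite leqNgt kj.
have cj : (c < j)%N.
  rewrite ltnNge leq_eqVlt; apply/negP => /orP[/eqP jc|jc].
    have h1 : L c <= dl + edist (p m0) (p c) by exact: edist_tri.
    have h2 := num2 He0 He1 dl0 hb.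
    move: hj; rewrite jc edist_sym => hj.
    rewrite /a in hj; lra.
  by have := hinv _ jc; rewrite -/a ltNge hj.
have j0 : (0 < j)%N by apply: leq_ltn_trans cj.
have jm0 : (j <= m0)%N by apply: jmin; rewrite /P m0n edist_xx a0.
have impr : improves ps eps q c j.
  rewrite /improves.
  have h1 : L j <= dl + edist (p m0) (p j) by exact: edist_tri.
  have h2 := num1 He0 He1 dl0 hb.
  rewrite edist_sym in hj; rewrite /a in hj; lra.
exists j; split => //.
rewrite mem_out jn /edge j0 cj /=.
rewrite radius_eq //.
have hr : a < dpre ps (p j) j.
  apply: lt_le_trans (Hg j0 jm0 m0n).
  by apply: dpre_gt => // k kj; rewrite edist_sym; apply: below.
have h1 : edist (p c) (p j) <= edist (p c) q + L j by exact: edist_tri.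
rewrite [edist (p c) q]edist_sym in h1.
move: impr; rewrite /improves => impr.
rewrite ler_pdivlMr //.
have e1 := ler_wpM2r (ltW He0) h1.
have e2 := ler_wpM2r (ltW He0) impr.
have e3 : 0 <= eps * eps * L c by rewrite mulr_ge0 // ?edist_ge0 // mulr_ge0 // ltW.
rewrite /a in hr; move: e1 e2 e3 hr; lra.
Qed.

Lemma route_correct c t r : route ps eps q c t r -> (c < n)%N -> Inv c ->
  L r <= (1 + eps) * dl.
Proof.
elim=> {c t r} [c Hstop|c m t r ms himp hbef _ IH] cn hinv.
  case: hinv => [//|hinv].
  case: (lerP (L c) ((1 + eps) * dl)) => [//|hb].
  have [j [jin jimp _]] := bad_step cn hb hinv.
  have := Hstop (index j (out c)); rewrite index_mem jin nth_index //.
  by move=> /(_ isT); rewrite jimp.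
set j' := nth 0%N (out c) m in himp *.
have [j'n cj'] := out_lt (mem_nth 0%N ms).
apply: IH => //.
have hle := improves_le himp.
case: hinv => [h|hinv]; first by left; apply: le_trans h.
case: (lerP (L c) ((1 + eps) * dl)) => [h|hb]; first by left; apply: le_trans h.
right.
have [j [jin jimp jbelow]] := bad_step cn hb hinv.
have mi : (m <= index j (out c))%N.
  rewrite leqNgt; apply/negP => /hbef; rewrite nth_index // jimp //.
have j'j : (j' <= j)%N.
  have := nth_out_mono mi (_ : (index j (out c) < size (out c))%N).
  by rewrite nth_index // index_mem => /(_ jin).
move=> k kj'.
apply: le_lt_trans (jbelow k (leq_trans kj' j'j)).
move: hle He0; nra.
Qed.

End Route.


Section Misc.
Variable R : realType.

Lemma e_le4 : expR (1 : R) <= 4.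
Proof.
have h1 := expR_ge1Dx (- (1 / 2) : R).
have h2 := expRxMexpNx_1 (1 / 2 : R).
have h3 : expR (1 : R) = expR (1 / 2) * expR (1 / 2).
  by rewrite -expRD; congr expR; lra.
have p1 := expR_gt0 (1 / 2 : R).
have p2 := expR_gt0 (- (1 / 2) : R).
rewrite h3.
set a := expR (1 / 2 : R) in h2 h3 p1 *.
set b := expR (- (1 / 2) : R) in h1 h2 p2.
have : a <= 2 by nra.
nra.
Qed.

Lemma floor_close (a b : R) : Num.floor a = Num.floor b -> `|a - b| < 1.
Proof.
move=> e; have /andP[a1 a2] := floor_itv a; have /andP[b1 b2] := floor_itv b.
rewrite e intrD in a1 a2; rewrite intrD in b2.
move: a1 a2 b1 b2; set z := (Num.floor b)%:~R => a1 a2 b1 b2.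
rewrite ltr_norml; apply/andP; split; lra.
Qed.

End Misc.

Section Pack.
Variables (R : realType) (d : nat) (ps : seq 'rV[R]_d) (eps : R).
Local Notation n := (size ps).
Local Notation p i := (nth 0 ps i).
Hypothesis Hd : (0 < d)%N.
Hypothesis Hn : (2 <= n)%N.
Hypothesis Hu : uniq ps.
Hypothesis Hg : greedy_perm ps.
Hypothesis He0 : 0 < eps.
Hypothesis He1 : eps < 1 / 2.

Local Notation out := (out_edges ps eps).
Local Notation Dm := (maxdist ps).
Local Notation mm := (mindist ps).
Local Notation g j := (dpre ps (p j) j).

Definition kk j := Num.truncn (ln (Dm / g j)).
Definition K' := Num.truncn (ln (spread ps)).
Definition AA : R := 32 * d%:R / eps.
Definition BB := (Num.truncn AA).+1.
Definition Mp := (2 * BB).-1.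
Definition hh j : R := Dm / (4 * expR (kk j)%:R * d%:R).

Lemma Dm_gt0 : 0 < Dm. Proof. exact: maxdist_gt0. Qed.
Lemma mm_gt0 : 0 < mm. Proof. exact: mindist_gt0. Qed.

Lemma g_gt0 j : (0 < j)%N -> (j < n)%N -> 0 < g j.
Proof. move=> j0 jn; apply: lt_le_trans mm_gt0 _; exact: g_ge_min. Qed.

Lemma kk_bounds j : (0 < j)%N -> (j < n)%N ->
  [/\ expR (kk j)%:R <= Dm / g j, Dm / g j < expR (kk j)%:R * expR 1 & (kk j <= K')%N].
Proof.
move=> j0 jn.
have g0 := g_gt0 j0 jn.
have gD : g j <= Dm by exact: g_le_max.
have x1 : 1 <= Dm / g j by rewrite ler_pdivlMr // mul1r.
have x0 : 0 < Dm / g j by apply: lt_le_trans x1.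
have l0 : 0 <= ln (Dm / g j) by apply: ln_ge0.
have /andP[t1 t2] := truncn_itv l0.
have ex : expR (ln (Dm / g j)) = Dm / g j by apply: lnK; rewrite posrE.
split.
- by rewrite -ex ler_expR.
- rewrite -expRD -ex ltr_expR. by move: t2; rewrite -[(_.+1)%:R]natr1.
- rewrite /kk /K'; apply: le_truncn. rewrite ler_ln ?posrE //; last first.
    by apply: lt_le_trans (spread_ge1 Hn Hu).
  rewrite /spread; apply: ler_wpM2l; first exact: ltW Dm_gt0.
  rewrite lef_pV2 ?posrE ?mm_gt0 //; try exact: g_ge_min; exact: g_gt0.
Qed.

Lemma BB_gt_AA : AA < BB%:R.
Proof. exact: truncnS_gt. Qed.

Lemma AA_ge0 : 0 <= AA.
Proof. rewrite /AA; apply: divr_ge0; last exact: ltW. by rewrite mulr_ge0. Qed.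

Definition cellz (c j : nat) (i : 'I_d) : int :=
  Num.floor ((p j ord0 i - p c ord0 i) / hh j) + (BB%:Z).

Definition fcell c j : 'I_K'.+1 * {ffun 'I_d -> 'I_Mp.+1} :=
  (inord (kk j), [ffun i => inord `|cellz c j i|%N]).

Lemma hh_gt0 j : 0 < hh j.
Proof.
rewrite /hh divr_gt0 ?Dm_gt0 // mulr_gt0 ?ltr0n // mulr_gt0 ?expR_gt0 //.
Qed.

Lemma edge_bound c j : j \in out c -> edist (p c) (p j) <= 8 * g j / eps.
Proof.
rewrite mem_out => /andP[jn /and3P[j0 cj]].
by rewrite (radius_eq Hn Hg).
Qed.

Lemma coord_range c j i : j \in out c ->
  `|(p j ord0 i - p c ord0 i) / hh j| <= AA.
Proof.
move=> jin.
have [jn cj] := out_lt jin.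
have j0 : (0 < j)%N by apply: leq_ltn_trans cj.
have [k1 k2 _] := kk_bounds j0 jn.
have eb := edge_bound jin.
have cb := coord_le_edist (p j) (p c) i.
rewrite edist_sym in cb.
have h0 := hh_gt0 j.
rewrite normrM (gtr0_norm (x := (hh j)^-1)) ?invr_gt0 // ler_pdivrMr //.
apply: (le_trans cb); apply: (le_trans eb).
have g0 := g_gt0 j0 jn.
set E := expR (kk j)%:R in k1 k2 *.
have E0 : 0 < E by apply: expR_gt0.
have gE : g j <= Dm / E.
  by rewrite ler_pdivlMr // mulrC -ler_pdivlMr.
rewrite /AA /hh -/E.
have d0 : (0 : R) < d%:R by rewrite ltr0n.
have -> : 32 * d%:R / eps * (Dm / (4 * E * d%:R)) = 8 * (Dm / E) / eps.
  by field; rewrite ?lt0r_neq0 //; do ?apply: mulr_gt0.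
apply: ler_wpM2r; first by rewrite invr_ge0 ltW.
by apply: ler_wpM2l.
Qed.

Lemma cellz_range c j i : j \in out c ->
  (0 <= cellz c j i)%R /\ (cellz c j i < (2 * BB)%N%:Z)%R.
Proof.
move=> jin.
have ha := coord_range i jin.
have hb := BB_gt_AA.
set a := (p j ord0 i - p c ord0 i) / hh j in ha.
have l1 : (- (BB%:Z) <= Num.floor a)%R.
  rewrite floor_ge_int intrN /=.
  move: ha; rewrite ler_norml => /andP[h1 h2]; move: hb h1; lra.
have l2 : (Num.floor a < BB%:Z)%R.
  rewrite real_floor_lt_int ?num_real //=.
  move: ha; rewrite ler_norml => /andP[h1 h2]; move: hb h2; lra.
rewrite /cellz -/a.
move: l1 l2; set z := Num.floor a; clear; lia.
Qed.

Lemma sep_aux c j1 j2 : j1 \in out c -> j2 \in out c -> (j1 < j2)%N ->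
  kk j1 = kk j2 -> (forall i, cellz c j1 i = cellz c j2 i) -> False.
Proof.
move=> j1in j2in j12 ek ec.
have [j2n cj2] := out_lt j2in.
have j20 : (0 < j2)%N by apply: leq_ltn_trans cj2.
have [_ k2 _] := kk_bounds j20 j2n.
have hE : hh j1 = hh j2 by rewrite /hh ek.
have close : forall i, `|p j2 ord0 i - p j1 ord0 i| <= hh j2.
  move=> i; have := ec i; rewrite /cellz hE => /addIr /floor_close.
  rewrite -mulrBl opprB addrA subrK normrM (gtr0_norm (x := (hh j2)^-1)) ?invr_gt0 ?hh_gt0 //.
  rewrite ltr_pdivrMr ?hh_gt0 // mul1r distrC; exact: ltW.
have ub := edist_cell (ltW (hh_gt0 j2)) close.
have lb : g j2 <= edist (p j2) (p j1) by exact: dpre_le.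
have g0 := g_gt0 j20 j2n.
have e4 := @e_le4 R.
set E := expR (kk j2)%:R in k2.
have E0 : 0 < E by apply: expR_gt0.
have d0 : (0 : R) < d%:R by rewrite ltr0n.
have ee0 : 0 < expR (1 : R) by apply: expR_gt0.
have : d%:R * hh j2 = Dm / (4 * E) by rewrite /hh -/E; field; rewrite ?lt0r_neq0.
move=> eh; rewrite eh in ub.
have k2' : Dm < E * expR 1 * g j2 by rewrite -ltr_pdivrMr.
have : Dm / (4 * E) < g j2.
  rewrite ltr_pdivrMr; last by rewrite mulr_gt0.
  apply: lt_le_trans k2' _.
  have EG := mulr_ge0 (ltW E0) (ltW g0); move: EG e4; nra.
move: lb ub; lra.
Qed.

Lemma fcell_inj c : {in out c &, injective (fcell c)}.
Proof.
move=> j1 j2 j1in j2in; rewrite /fcell => -[ek ec].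
have [j1n cj1] := out_lt j1in; have [j2n cj2] := out_lt j2in.
have j10 : (0 < j1)%N by apply: leq_ltn_trans cj1.
have j20 : (0 < j2)%N by apply: leq_ltn_trans cj2.
have [_ _ kb1] := kk_bounds j10 j1n; have [_ _ kb2] := kk_bounds j20 j2n.
have ek' : kk j1 = kk j2.
  by have := congr1 (@nat_of_ord _) ek; rewrite !inordK // ltnS.
have MB : Mp.+1 = (2 * BB)%N by rewrite /Mp prednK // muln_gt0.
have ec' : forall i, cellz c j1 i = cellz c j2 i.
  move=> i; have := congr1 (fun f : {ffun 'I_d -> 'I_Mp.+1} => nat_of_ord (f i)) ec; rewrite !ffunE /=.
  have [a1 a2] := cellz_range i j1in; have [b1 b2] := cellz_range i j2in.
  rewrite !inordK ?MB; first 1 last.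
  - by move: b1 b2; clear; lia.
  - by move: a1 a2; clear; lia.
  by move: a1 b1; clear; lia.
case: (ltngtP j1 j2) => // h.
- by case: (sep_aux j1in j2in h ek' ec').
- by case: (sep_aux j2in j1in h (esym ek') (fun i => esym (ec' i))).
Qed.

Lemma out_size c : (size (out c) <= K'.+1 * (Mp.+1 ^ d))%N.
Proof.
have u : uniq (out c) by rewrite filter_uniq // iota_uniq.
rewrite -(size_map (fcell c)).
have -> : (K'.+1 * Mp.+1 ^ d)%N = #|{: 'I_K'.+1 * {ffun 'I_d -> 'I_Mp.+1}}|.
  by rewrite card_prod card_ffun !card_ord.
rewrite cardE; apply: uniq_leq_size.
  by rewrite map_inj_in_uniq //; exact: fcell_inj.
by move=> x _; rewrite mem_enum.
Qed.

End Pack.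


Section Time.
Variables (R : realType) (d : nat) (ps : seq 'rV[R]_d) (eps : R) (q : 'rV[R]_d).
Local Notation n := (size ps).
Local Notation p i := (nth 0 ps i).
Hypothesis Hd : (0 < d)%N.
Hypothesis Hn : (2 <= n)%N.
Hypothesis Hu : uniq ps.
Hypothesis Hg : greedy_perm ps.
Hypothesis He0 : 0 < eps.
Hypothesis He1 : eps < 1 / 2.

Local Notation out := (out_edges ps eps).
Local Notation Dm := (maxdist ps).
Local Notation mm := (mindist ps).
Local Notation L c := (edist q (p c)).

Definition Delta := ((K' ps).+1 * (Mp d eps).+1 ^ d)%N.
Definition theta : R := Num.max (mm / 2) (L 0 - Dm).
Definition V (x : R) : R :=
  if x < theta then Delta%:R else Delta%:R * (2 + 4 / eps * ln (x / theta)).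

Lemma L_lb c : (c < n)%N -> L 0 - Dm <= L c.
Proof.
move=> cn.
have h1 : L 0 <= L c + edist (p c) (p 0) by exact: edist_tri.
have h2 : edist (p c) (p 0) <= Dm.
  case: c cn {h1} => [|c] cn; first by rewrite edist_xx ltW // maxdist_gt0.
  by apply: maxdist_ge => //; apply: leq_trans Hn.
move: h1 h2; lra.
Qed.

Lemma theta_gt0 : 0 < theta.
Proof.
rewrite /theta lt_max; apply/orP; left.
by rewrite divr_gt0 // mindist_gt0.
Qed.

Lemma deg_le c : (size (out c) <= Delta)%N.
Proof. exact: (out_size Hd Hn Hu Hg He0). Qed.

Lemma V_ge x : theta <= x -> V x = Delta%:R * (2 + 4 / eps * ln (x / theta)).
Proof. by move=> h; rewrite /V ltNge h. Qed.

Lemma ln_ratio_ge0 x : theta <= x -> 0 <= ln (x / theta).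
Proof.
move=> h; apply: ln_ge0; rewrite ler_pdivlMr ?theta_gt0 // mul1r //.
Qed.

Lemma Delta_le_V x : Delta%:R <= V x.
Proof.
rewrite /V; case: ifPn => [_|]; first exact: lexx.
rewrite -leNgt => h.
have l0 := ln_ratio_ge0 h.
have D0 : (0 : R) <= Delta%:R by [].
have : 0 <= 4 / eps * ln (x / theta) by rewrite mulr_ge0 // divr_ge0 // ltW.
move: D0; nra.
Qed.

Lemma route_time c t r : route ps eps q c t r -> (c < n)%N -> t%:R <= V (L c).
Proof.
elim=> {c t r} [c _|c m t r ms himp _ _ IH] cn.
  apply: le_trans (Delta_le_V _); rewrite ler_nat; exact: deg_le.
set j := nth 0%N (out c) m in himp IH *.
have [jn cj] := out_lt (mem_nth 0%N ms).
have IH' := IH jn.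
have hle : L j <= L c by exact: (improves_le He0 himp).
have hmm : mm <= edist (p c) (p j) by apply: mindist_le => //; rewrite neq_ltn cj.
have htri : edist (p c) (p j) <= edist (p c) q + L j by exact: edist_tri.
rewrite [edist (p c) q]edist_sym in htri.
have hth : theta <= L c.
  rewrite /theta ge_max; apply/andP; split; last exact: L_lb.
  move: hmm htri hle; lra.
rewrite (V_ge hth) natrD.
have hm : (m.+1)%:R <= (Delta%:R : R) by rewrite ler_nat (leq_trans ms (deg_le c)).
have l0 := ln_ratio_ge0 hth.
have D0 : (0 : R) <= Delta%:R by [].
have w0 : 0 <= 4 / eps by rewrite divr_ge0 // ltW.
have wl0 : 0 <= 4 / eps * ln (L c / theta) by rewrite mulr_ge0.
case: (ltP (L j) theta) => hj.
  rewrite /V hj in IH'.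
  move: hm IH' wl0 D0; nra.
rewrite (V_ge hj) in IH'.
have key : 1 + 4 / eps * ln (L j / theta) <= 4 / eps * ln (L c / theta).
  have th0 := theta_gt0.
  have Lj0 : 0 < L j by apply: lt_le_trans hj.
  have Lc0 : 0 < L c by apply: lt_le_trans hth.
  have e4 : 0 < 1 - eps / 4 by move: He1; lra.
  have p1 : 0 < L j / theta by rewrite divr_gt0.
  have p3 : 0 < L c / theta by rewrite divr_gt0.
  have p2 : 0 < (1 - eps / 4) * (L c / theta) by rewrite mulr_gt0.
  have s1 : ln (L j / theta) <= ln ((1 - eps / 4) * (L c / theta)).
    rewrite ler_ln ?posrE // mulrA ler_pM2r //; last by rewrite invr_gt0.
  have s1e : ln ((1 - eps / 4) * (L c / theta)) = ln (1 - eps / 4) + ln (L c / theta).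
    by apply: lnM; rewrite posrE.
  rewrite s1e in s1.
  have s2 : ln (1 - eps / 4) <= - (eps / 4).
    by rewrite -[1 - _]/(1 + - (eps / 4)); apply: le_ln1Dx; move: He1 He0; lra.
  have s3 : ln (L j / theta) <= - (eps / 4) + ln (L c / theta).
    by apply: le_trans s1 _; rewrite lerD2r.
  have := ler_wpM2l w0 s3.
  rewrite mulrDr.
  have -> : 4 / eps * - (eps / 4) = -1 by field; rewrite lt0r_neq0.
  lra.
have := ler_wpM2l D0 key.
move: hm IH'; nra.
Qed.


Lemma lnPhi_ge0 : 0 <= ln (spread ps).
Proof. by apply: ln_ge0; apply: spread_ge1. Qed.

Lemma V0_bound : V (L 0) <= Delta%:R * (10 / eps * (1 + ln (spread ps))).
Proof.
have l0 := lnPhi_ge0.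
have D0 : (0 : R) <= Delta%:R by [].
have w : 2 <= 1 / eps.
  by rewrite ler_pdivlMr // -ler_pdivlMl ?ltr0n //; move: He1; lra.
have ww : 10 / eps = 10 * (1 / eps) by rewrite mulrA mulr1.
rewrite /V; case: ifPn => [_|].
  rewrite -[X in X <= _]mulr1 ler_wpM2l // ww.
  have := mulr_ge0 (ler0n R 10) (ltW He0); move: l0 w; nra.
rewrite -leNgt => h.
apply: ler_wpM2l => //.
have th0 := theta_gt0.
have mm0 : 0 < mm by apply: mindist_gt0.
have Dm0 : 0 < Dm by apply: maxdist_gt0.
have L00 : 0 < L 0 by apply: lt_le_trans h.
have r1 : L 0 / theta <= 3 * spread ps.
  rewrite ler_pdivrMr //.
  have t1 : L 0 - Dm <= theta by rewrite /theta le_max lexx orbT.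
  have t2 : mm / 2 <= theta by rewrite /theta le_max lexx.
  have s1 : 1 <= spread ps by apply: spread_ge1.
  have Fm : spread ps * mm = Dm by rewrite /spread divfK // lt0r_neq0.
  have q1 : 0 <= spread ps * (theta - mm / 2).
    by apply: mulr_ge0; [apply: le_trans s1 | rewrite subr_ge0].
  have q2 : 0 <= (spread ps - 1) * theta.
    by apply: mulr_ge0; [rewrite subr_ge0 | apply: ltW].
  move: t1 Fm q1 q2; set F := spread ps; set T := theta; nra.
have r2 : ln (L 0 / theta) <= 2 + ln (spread ps).
  have s0 : 0 < spread ps by apply: lt_le_trans (spread_ge1 Hn Hu).
  have p3 : 0 < 3 * spread ps by rewrite mulr_gt0.
  have p4 : 0 < L 0 / theta by rewrite divr_gt0.
  have r2a : ln (L 0 / theta) <= ln (3 * spread ps) by rewrite ler_ln ?posrE.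
  have r2b : ln (3 * spread ps) = ln 3 + ln (spread ps).
    by apply: lnM; rewrite posrE.
  have r2c : ln (3 : R) <= 2.
    have e3 : (3 : R) = 1 + 2 by lra.
    by rewrite e3; apply: le_ln1Dx; lra.
  by move: r2a r2c; rewrite r2b; lra.
rewrite ww.
set u := 1 / eps in w *.
set lf := ln (spread ps) in l0 r2 *.
set lx := ln (L 0 / theta) in r2 *.
have -> : 4 / eps = 4 * u by rewrite /u mulrA mulr1.
have := mulr_ge0 (le_trans (ler0n R 2) w) l0.
move: r2 w l0; nra.
Qed.

Lemma Delta_bound : (Delta%:R : R) <= (1 + ln (spread ps)) * ((65 * d)%N%:R / eps) ^+ d.
Proof.
rewrite /Delta natrM natrX.
have l0 := lnPhi_ge0.
have k1 : ((K' ps).+1)%:R <= 1 + ln (spread ps) :> R.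
  rewrite -natr1 addrC lerD2l /K' truncn_le //.
have MB : (Mp d eps).+1 = (2 * BB d eps)%N by rewrite /Mp prednK // muln_gt0.
have A0 := AA_ge0 d He0.
have b1 : (BB d eps)%:R <= AA d eps + 1 :> R.
  rewrite /BB -natr1 lerD2r truncn_le //.
have dpos : (1 : R) <= d%:R by rewrite ler1n.
have w : 2 <= 1 / eps.
  by rewrite ler_pdivlMr // -ler_pdivlMl ?ltr0n //; move: He1; lra.
have m1 : ((Mp d eps).+1)%:R <= (65 * d)%N%:R / eps :> R.
  rewrite MB natrM natrM.
  have eA : AA d eps = 32 * d%:R * (1 / eps) by rewrite /AA mulrA mulr1.
  have -> : (65%:R : R) * d%:R / eps = 65 * d%:R * (1 / eps) by rewrite mulrA mulr1.
  rewrite eA in b1.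
  set u := 1 / eps in w b1 *; set D := d%:R in dpos b1 *.
  have : 1 * 2 <= D * u by apply: ler_pM.
  move: b1; nra.
apply: ler_pM => //.
- by apply: exprn_ge0.
- apply: lerXn2r => //; rewrite nnegrE // divr_ge0 // ltW //.
Qed.

End Time.


Lemma final_eq (R : realType) (x A E e : R) : e != 0 -> E != 0 ->
  (1 + x) * (A / E) * (10 / e * (1 + x)) = 10 * A / (e * E) * (1 + x) ^+ 2.
Proof. move=> e0 E0; field; by rewrite e0 E0. Qed.

Unset Implicit Arguments.

Theorem lemma4p3 :
  forall d : nat, (0 < d)%N ->
  exists C : nat,
  forall (R : realType) (ps : seq 'rV[R]_d) (eps : R) (q : 'rV[R]_d),
    (2 <= size ps)%N -> uniq ps -> greedy_perm ps ->
    0 < eps -> eps < 1 / 2 ->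
    (exists t r, route ps eps q 0 t r) /\
    (forall t r, route ps eps q 0 t r ->
       (r < size ps)%N /\
       (forall p' : 'rV[R]_d, p' \in ps ->
          edist q (nth 0 ps r) <= (1 + eps) * edist q p') /\
       t%:R <= C%:R * eps ^- d.+1 * (1 + ln (spread ps)) ^+ 2).
Proof.
move=> d Hd; exists (10 * (65 * d) ^ d)%N => R ps eps q Hn Hu Hg He0 He1.
have n0 : (0 < size ps)%N by apply: leq_trans Hn.
split; first exact: route_exists.
move=> t r hr; split; first exact: (route_lt hr n0).
split.
  move=> p' pin.
  have m0n : (index p' ps < size ps)%N by rewrite index_mem.
  rewrite -(nth_index 0 pin).
  apply: (route_correct Hn Hg He0 He1 m0n hr n0).
  by right.
have h1 := route_time Hd Hn Hu Hg He0 He1 hr n0.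
have h2 := V0_bound q Hn Hu He0 He1.
have h3 := Delta_bound Hd Hn Hu He0 He1.
apply: (le_trans h1); apply: (le_trans h2).
set l := ln (spread ps).
have l0 : 0 <= l by apply: ln_ge0; apply: spread_ge1.
have w0 : 0 <= 10 / eps * (1 + l).
  by apply: mulr_ge0; [apply: divr_ge0 => //; apply: ltW | lra].
apply: le_trans (ler_wpM2r w0 h3) _.
rewrite expr_div_n exprS.
have eC : ((10 * (65 * d) ^ d)%N%:R : R) = 10 * ((65 * d)%N%:R) ^+ d.
  by rewrite natrM natrX.
rewrite eC.
have e0 : eps != 0 by rewrite lt0r_neq0.
have eD : eps ^+ d != 0 by rewrite expf_neq0.
rewrite le_eqVlt; apply/orP; left; apply/eqP.
exact: final_eq.
Qed.
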